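(* Let $\alpha>0$ and $\beta,\gamma>1/2$, all different from $1$, satisfy $\frac{\alpha}{\alpha-1}=\frac{\beta}{\beta-1}+\frac{\gamma}{\gamma-1}$, and assume $\beta>\gamma$. Write $\eta'=\frac{\eta-1}{\eta}$. Then: (i) If $0<\frac{\alpha'}{\beta'}<1$, then either (Case 1) $\alpha,\beta,\gamma>1$, $\alpha<\gamma<\beta$, $\alpha\in(1,2)$ and $\beta,\gamma\in(1,\infty)$; or (Case 2) $\alpha,\beta,\gamma<1$, $\gamma<\beta<\alpha$, $\alpha\in[2/3,1)$ and $\beta,\gamma\in[1/2,1)$. (ii) If $0<\frac{\beta'}{\alpha'}<1$, then (Case 3) $\alpha,\beta>1$, $\gamma<1$, $\gamma<\beta<\alpha$, $\gamma\in[1/2,1)$, $\beta\in(1,2)$ and $\alpha\in(1,\infty)$. (iii) If $0<\frac{\gamma'}{\alpha'}<1$, then (Case 4) $\alpha,\gamma<1$, $\beta>1$, $\alpha<\gamma<\beta$, $\alpha\in(0,1)$, $\gamma\in[1/2,1)$ and $\beta\in(1,\infty)$. Moreover, Cases 1–4 cover all possible cases (i.e. every such triple $(\alpha,\beta,\gamma)$ falls into one of Cases 1–4). *)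

(* Defs.v *)
From HB Require Import structures.
From mathcomp Require Import all_boot all_order all_algebra.
Set Implicit Arguments. Unset Strict Implicit. Unset Printing Implicit Defensive.
Import Order.TTheory GRing.Theory Num.Theory.
Local Open Scope ring_scope.

Definition hprime (R : realFieldType) (eta : R) : R := (eta - 1) / eta.

Definition Case1 (R : realFieldType) (a b c : R) : Prop :=
  (1 < a /\ 1 < b /\ 1 < c) /\ (a < c /\ c < b) /\
  (1 < a /\ a < 2) /\ (1 < b /\ 1 < c).

Definition Case2 (R : realFieldType) (a b c : R) : Prop :=
  (a < 1 /\ b < 1 /\ c < 1) /\ (c < b /\ b < a) /\
  (2 / 3 <= a /\ a < 1) /\ (1 / 2 <= b /\ b < 1) /\ (1 / 2 <= c /\ c < 1).

Definition Case3 (R : realFieldType) (a b c : R) : Prop :=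
  (1 < a /\ 1 < b /\ c < 1) /\ (c < b /\ b < a) /\
  (1 / 2 <= c /\ c < 1) /\ (1 < b /\ b < 2) /\ 1 < a.

Definition Case4 (R : realFieldType) (a b c : R) : Prop :=
  (a < 1 /\ c < 1 /\ 1 < b) /\ (a < c /\ c < b) /\
  (0 < a /\ a < 1) /\ (1 / 2 <= c /\ c < 1) /\ 1 < b.

(* Main.v *)
Require Import Defs.
From HB Require Import structures.
From mathcomp Require Import all_boot all_order all_algebra.
From mathcomp Require Import ring lra.
Import Order.TTheory GRing.Theory Num.Theory.
Local Open Scope ring_scope.

Lemma cover (R : realFieldType) (a b c : R)
  (ha : 0 < a) (hb : 1 / 2 < b) (hc : 1 / 2 < c)
  (ha1 : a != 1) (hb1 : b != 1) (hc1 : c != 1)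
  (E : a * (b - 1) * (c - 1) = b * (a - 1) * (c - 1) + c * (a - 1) * (b - 1))
  (hbc : c < b) :
  Case1 a b c \/ Case2 a b c \/ Case3 a b c \/ Case4 a b c.
Proof.
have E' : a * (b * c - 1) = 2 * b * c - b - c by nra.
case: (ltgtP b 1) => hb0; last by rewrite hb0 eqxx in hb1.
- case: (ltgtP c 1) => hc0; last by rewrite hc0 eqxx in hc1.
  + have k : 0 < 1 - b * c by nra.
    have a1 : a < 1 by nra.
    have h1 : 0 < c * (1 - b) ^+ 2 by apply: mulr_gt0; [lra| apply: exprn_gt0; lra].
    have h2 : b < a by nra.
    have h3 : 0 <= (2*b-1)*(1-c) + (1-b)*(2*c-1) by apply: addr_ge0; apply: mulr_ge0; lra.
    have h5 : 0 <= (a - 2/3) * (1 - b*c).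
      have -> : (a - 2/3) * (1 - b*c) = -(a*(b*c-1)) - 2/3*(1-b*c) by ring.
      rewrite E'.
      have -> : -(2 * b * c - b - c) - 2/3*(1-b*c) = ((2*b-1)*(1-c) + (1-b)*(2*c-1))/3 by field.
      by apply: divr_ge0 => //; lra.
    have h4 : 2/3 <= a by rewrite -subr_ge0; move: h5; rewrite pmulr_lge0.
    right; left; rewrite /Case2; lra.
  + lra.
- case: (ltgtP c 1) => hc0; last by rewrite hc0 eqxx in hc1.
  + case: (ltgtP (b*c) 1) => k.
    * have a1 : 1 < a by nra.
      have h1 : 0 < c * (b - 1) ^+ 2 by apply: mulr_gt0; [lra| apply: exprn_gt0; lra].
      have h2 : b < a by nra.
      have h3 : b < 2 by nra.
      right; right; left; rewrite /Case3; lra.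
    * have a1 : a < 1 by nra.
      have h1 : 0 < b * (1 - c) ^+ 2 by apply: mulr_gt0; [lra| apply: exprn_gt0; lra].
      have h2 : a < c by nra.
      right; right; right; rewrite /Case4; lra.
    * exfalso; nra.
  + have k : 1 < b * c by nra.
    have h0 : 0 < (b - 1) * (c - 1) by apply: mulr_gt0; lra.
    have a1 : 1 < a by nra.
    have h1 : 0 < b * (c - 1) ^+ 2 by apply: mulr_gt0; [lra| apply: exprn_gt0; lra].
    have h2 : a < c by nra.
    have h3 : a < 2 by nra.
    left; rewrite /Case1; lra.
Qed.

Lemma ratio01 (R : realFieldType) (N D : R) :
  0 < N / D < 1 -> (0 < D /\ 0 < N /\ N < D) \/ (D < 0 /\ N < 0 /\ D < N).
Proof.
move=> /andP [t0 t1].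
have D0 : D != 0 by apply/eqP => D0; move: t0; rewrite D0 invr0 mulr0 ltxx.
have hN : N = (N / D) * D by rewrite divfK.
move: t0 t1 hN; set t := N / D => t0 t1 hN.
case: (ltgtP D 0) => hD; last by rewrite hD eqxx in D0.
- right; nra.
- left; nra.
Qed.

Theorem lemma7 (R : realFieldType) (a b c : R)
  (ha : 0 < a) (hb : 1 / 2 < b) (hc : 1 / 2 < c)
  (ha1 : a != 1) (hb1 : b != 1) (hc1 : c != 1)
  (hrel : a / (a - 1) = b / (b - 1) + c / (c - 1))
  (hbc : c < b) :
  [/\ (0 < hprime a / hprime b < 1 -> Case1 a b c \/ Case2 a b c),
      (0 < hprime b / hprime a < 1 -> Case3 a b c),
      (0 < hprime c / hprime a < 1 -> Case4 a b c) &
      (Case1 a b c \/ Case2 a b c \/ Case3 a b c \/ Case4 a b c)].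
Proof.
have a0 : a != 0 by rewrite gt_eqF.
have b0 : b != 0 by apply/eqP => b0; rewrite b0 in hb; lra.
have c0 : c != 0 by apply/eqP => c0; rewrite c0 in hc; lra.
have a10 : a - 1 != 0 by rewrite subr_eq0.
have b10 : b - 1 != 0 by rewrite subr_eq0.
have c10 : c - 1 != 0 by rewrite subr_eq0.
have Erel : a * (b - 1) * (c - 1) = b * (a - 1) * (c - 1) + c * (a - 1) * (b - 1).
{ have -> : a * (b - 1) * (c - 1) = a / (a - 1) * ((a - 1) * (b - 1) * (c - 1)) by field.
  rewrite hrel; field.
  by rewrite c10 b10. }
have cov := @cover R a b c ha hb hc ha1 hb1 hc1 Erel hbc.
have rab : hprime a / hprime b = ((a - 1) * b) / ((b - 1) * a) by rewrite /hprime; field; rewrite ?a0 ?b0 ?c0 ?a10 ?b10 ?c10.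
have rba : hprime b / hprime a = ((b - 1) * a) / ((a - 1) * b) by rewrite /hprime; field; rewrite ?a0 ?b0 ?c0 ?a10 ?b10 ?c10.
have rca : hprime c / hprime a = ((c - 1) * a) / ((a - 1) * c) by rewrite /hprime; field; rewrite ?a0 ?b0 ?c0 ?a10 ?b10 ?c10.
split => //.
- rewrite rab => /(@ratio01 R) H.
  case: cov => [|[|[]]]; [by left|by right| |];
    rewrite /Case3 /Case4 => C; exfalso; nra.
- rewrite rba => /(@ratio01 R) H.
  case: cov => [|[|[]]] //; rewrite /Case1 /Case2 /Case4 => C; exfalso; nra.
- rewrite rca => /(@ratio01 R) H.
  case: cov => [|[|[]]] //; rewrite /Case1 /Case2 /Case3 => C; exfalso; nra.
Qed.
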